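(* Let $\Omega$ be a smoothly bounded open subset of $\mathbb{C}$ and let $\Delta=\{(\sigma,\sigma):\sigma\in\partial\Omega\}$ be the diagonal in $\partial\Omega\times\partial\Omega$. Then $\Omega$ is convex if and only if $P_{\Omega}(\sigma,\tau)\geq 0$ for all $(\sigma,\tau)\in(\partial\Omega\times\partial\Omega)\setminus\Delta$.
   Context: An open set $\Omega\subseteq\mathbb{C}$ is smoothly bounded if it is bounded and $\partial\Omega$ is an embedded smooth submanifold of $\mathbb{C}$. Let $n_{\Omega}\colon\partial\Omega\to\mathbb{C}$ denote the outward unit normal vector of $\Omega$. The double-layer potential $P_{\Omega}\colon(\partial\Omega\times\mathbb{C})\setminus\Delta\to\mathbb{R}$ is $P_{\Omega}(\sigma,z)=\frac{1}{\pi}\operatorname{Re}\Big(\frac{n_{\Omega}(\sigma)}{\sigma-z}\Big)$ for $\sigma\in\partial\Omega$, $z\in\mathbb{C}$, $\sigma\neq z$. (The paper phrases the condition as ''$P_{\Omega}$ is positive'', positive meaning nonnegative.) *)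

(* Defs.v *)
(* The complex plane C is identified with R * R
   (R : realType), the point x + i y being the pair (x, y). *)
From HB Require Import structures.
From mathcomp Require Import all_boot all_order all_algebra.
From mathcomp Require Import all_classical all_reals all_analysis.
From mathcomp Require complex.
Import complex.ComplexField.
Set Implicit Arguments. Unset Strict Implicit. Unset Printing Implicit Defensive.
Import Order.TTheory GRing.Theory Num.Theory.
Import numFieldNormedType.Exports.
Local Open Scope classical_set_scope.
Local Open Scope ring_scope.

Section Defs.
Variable R : realType.
Notation P2 := (R * R)%type.

Fixpoint iter_deriv (f : P2 -> R) (l : seq P2) : P2 -> R :=
  match l with
  | [::] => f
  | v :: l' => fun x => 'D_v (iter_deriv f l') x
  end.

Definition smooth_on (U : set P2) (f : P2 -> R) : Prop :=
  forall l : seq P2,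
    (forall v x, U x -> derivable (iter_deriv f l) x v) /\
    {in U, continuous (iter_deriv f l)}.

Definition grad (f : P2 -> R) (x : P2) : P2 :=
  ('D_(1, 0) f x, 'D_(0, 1) f x).
Definition enorm (v : P2) : R := Num.sqrt (v.1 ^+ 2 + v.2 ^+ 2).

Definition bdry (A : set P2) : set P2 := closure A `\` interior A.

Definition local_defining_fun (Omega : set P2) (sigma : P2)
    (U : set P2) (rho : P2 -> R) : Prop :=
  [/\ open U, U sigma, smooth_on U rho,
      (forall z, U z -> (Omega z <-> rho z < 0)) &
      grad rho sigma != 0].

Definition smoothly_bounded (Omega : set P2) : Prop :=
  [/\ open Omega, bounded_set Omega &
      forall sigma, bdry Omega sigma ->
        exists U rho, local_defining_fun Omega sigma U rho].

Definition outward_unit_normal (Omega : set P2) (sigma v : P2) : Prop :=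
  exists U rho, local_defining_fun Omega sigma U rho /\
    v = (enorm (grad rho sigma))^-1 *: grad rho sigma.

Definition convex_set2 (Omega : set P2) : Prop :=
  forall x y (t : R), Omega x -> Omega y -> 0 <= t <= 1 ->
    Omega ((1 - t) *: x + t *: y).

Definition to_C (z : P2) : complex.complex R := complex.Complex z.1 z.2.
Definition double_layer (n : P2 -> P2) (sigma z : P2) : R :=
  pi^-1 * complex.Re (to_C (n sigma) / (to_C sigma - to_C z)).

End Defs.

(* Main.v *)
Require Import Defs.
From HB Require Import structures.
From mathcomp Require Import all_boot all_order all_algebra.
From mathcomp Require Import all_classical all_reals all_analysis.
From mathcomp Require complex.
From mathcomp Require Import ring lra.
Import complex.ComplexField.
Import Order.TTheory GRing.Theory Num.Theory.
Import numFieldNormedType.Exports.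
Local Open Scope classical_set_scope.
Local Open Scope ring_scope.

Section S.
Variable R : realType.
Implicit Types (Omega : set (R * R)).
Lemma re_div (a s t : R * R) :
  complex.Re (to_C a / (to_C s - to_C t)) =
  (a.1 * (s.1 - t.1) + a.2 * (s.2 - t.2)) / ((s.1 - t.1)^+2 + (s.2 - t.2)^+2).
Proof.
case: a s t => [a1 a2] [s1 s2] [t1 t2] /=.
rewrite /to_C /=.
rewrite /GRing.inv /= /GRing.mul /=.
set D := ((s1 - t1) ^+ 2 + (s2 - t2) ^+ 2).
change (a1 * ((s1 - t1) * D^-1) - a2 * (- ((s2 - t2) * D^-1)) = (a1 * (s1 - t1) + a2 * (s2 - t2)) / D).
by ring.
Qed.

Lemma img_closure (f : R * R -> R * R) (A B : set (R * R)) :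
  continuous f -> (forall z, A z -> B (f z)) -> forall p, closure A p -> closure B (f p).
Proof.
move=> fc sub p cp N hN.
have := cp _ (fc p N hN); case=> q [Aq Nq]; exists (f q); split => //; exact: sub.
Qed.
Arguments img_closure {f A B}.

Lemma clos_conv Omega : convex_set2 Omega -> forall (a b : R * R) (t : R),
  closure Omega a -> closure Omega b -> 0 <= t <= 1 ->
  closure Omega ((1 - t) *: a + t *: b).
Proof.
move=> cv a b t ca cb t01.
have cf : forall (c : R * R) (k1 k2 : R), continuous (fun s : R * R => k1 *: c + k2 *: s).
  move=> c k1 k2 s; apply: cvgD; first exact: cvg_cst.
  exact: scaler_continuous.
have step1 : forall b', Omega b' -> closure Omega ((1 - t) *: a + t *: b').
  move=> b' Ob'.
  have cf' : continuous (fun s : R * R => t *: b' + (1 - t) *: s) by exact: cf.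
  have := img_closure (B := Omega) cf' _ _ ca.
  move=> H; rewrite addrC; apply: H => z Oz; rewrite addrC; exact: cv.
have := img_closure (B := closure Omega) (cf a (1 - t) t) step1 _ cb.
have cc : closure Omega = closure (closure Omega) by apply/closure_id; exact: closed_closure.
by rewrite -cc.
Qed.

Lemma rho_le0 Omega (U : set (R * R)) (rho : R * R -> R) p :
  open U -> {in U, continuous rho} -> (forall z, U z -> (Omega z <-> rho z < 0)) ->
  U p -> closure Omega p -> rho p <= 0.
Proof.
move=> oU crho def Up cp; rewrite leNgt; apply/negP => r0.
have hc : rho @ p --> rho p by apply: crho; rewrite inE.
have N1 : \forall t \near p, 0 < rho t by exact: (cvgr_gt _ hc _ r0).
have N2 : nbhs p U by exact: oU.
have [q [Oq [Uq rq]]] := cp _ (filterI N2 N1).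
by move: rq; have := (def q Uq).1 Oq; lra.
Qed.
Lemma line_deriv (rho : R * R -> R) (p e : R * R) (c : R) :
  derivable rho (p + c *: e) e ->
  is_derive c 1 (fun s => rho (p + s *: e)) ('D_e rho (p + c *: e)).
Proof.
move=> d.
have E : (fun h : R => h^-1 *: (((fun s => rho (p + s *: e)) \o shift c) (h *: 1) - rho (p + c *: e)))
  = (fun h => h^-1 *: ((rho \o shift (p + c *: e)) (h *: e) - rho (p + c *: e))).
  by apply/funext => h /=; rewrite -[h%:A]/(h * 1) mulr1 scalerDl addrCA.
apply: DeriveDef; first by rewrite /derivable E.
by rewrite /derive E.
Qed.
Lemma mvt_line (rho : R * R -> R) (p e : R * R) (a : R) :
  (forall s, `|s| <= `|a| -> derivable rho (p + s *: e) e /\ {for (p + s *: e), continuous rho}) ->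
  exists c, `|c| <= `|a| /\ rho (p + a *: e) - rho p = 'D_e rho (p + c *: e) * a.
Proof.
move=> H.
set f := fun s : R => rho (p + s *: e).
have fc : forall s, `|s| <= `|a| -> {for s, continuous f}.
  move=> s sa; apply: (continuous_comp (f := fun s : R => p + s *: e) (g := rho)).
    apply: cvgD; first exact: cvg_cst.
    exact: scalel_continuous.
  exact: (H s sa).2.
have f0 : f 0 = rho p by rewrite /f scale0r addr0.
have [a0|a0] := leP 0 a.
  have h1 : forall x, x \in `]0, a[ -> is_derive x 1 f ('D_e rho (p + x *: e)).
    move=> x; rewrite in_itv /= => /andP[x0 xa]; apply: line_deriv; apply: (H x _).1.
    by rewrite (ger0_norm (ltW x0)) (ger0_norm a0) ltW.
  have h2 : {within `[0, a], continuous f}.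
    apply: continuous_in_subspaceT => x; rewrite inE /= in_itv /= => /andP[x0 xa].
    by apply: fc; rewrite (ger0_norm x0) (ger0_norm a0).
  have [c cI E] := MVT_segment a0 h1 h2.
  exists c; move: cI; rewrite in_itv /= => /andP[c0 ca]; split; first by rewrite (ger0_norm c0) (ger0_norm a0).
  by rewrite -f0 E subr0.
have h1 : forall x, x \in `]a, 0[ -> is_derive x 1 f ('D_e rho (p + x *: e)).
  move=> x; rewrite in_itv /= => /andP[x0 xa]; apply: line_deriv; apply: (H x _).1.
  rewrite (ler0_norm (ltW xa)) (ler0_norm (ltW a0)); lra.
have h2 : {within `[a, 0], continuous f}.
  apply: continuous_in_subspaceT => x; rewrite inE /= in_itv /= => /andP[x0 xa].
  by apply: fc; rewrite (ler0_norm xa) (ler0_norm (ltW a0)); lra.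
have [c cI E] := MVT_segment (ltW a0) h1 h2.
exists c; move: cI; rewrite in_itv /= => /andP[c0 ca]; split; first by rewrite (ler0_norm ca) (ler0_norm (ltW a0)); lra.
have : f a = f 0 - 'D_e rho (p + c *: e) * (0 - a) by rewrite -E; ring.
by rewrite f0 /f => ->; ring.
Qed.
Definition dot (u v : R * R) := u.1 * v.1 + u.2 * v.2.

Lemma dot_pos (m : R * R) : m != 0 -> 0 < dot m m.
Proof.
case: m => a b; rewrite /dot /= -!expr2 => H.
have [a0|a0] := eqVneq a 0.
  have b0 : b != 0 by apply: contraNneq H => b0; rewrite a0 b0.
  have : 0 < b ^+ 2 by rewrite exprn_even_gt0 //= b0 orbT.
  move: (sqr_ge0 a) => ? ?; lra.
have : 0 < a ^+ 2 by rewrite exprn_even_gt0 //= a0 orbT.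
move: (sqr_ge0 b) => ? ?; lra.
Qed.

Lemma dotDZ (m a : R * R) k : dot m (a + k *: m) = dot m a + k * dot m m.
Proof. case: m a => m1 m2 [a1 a2]; rewrite /dot /=.
change (k *: m1) with (k * m1); change (k *: m2) with (k * m2); ring. Qed.

Lemma dotN (m a b : R * R) : dot m (a - b) = - dot m (b - a).
Proof. by case: m a b => m1 m2 [a1 a2] [b1 b2]; rewrite /dot /=; ring. Qed.

Lemma scP (k a b : R) : k *: ((a, b) : R * R) = (k * a, k * b).
Proof. by []. Qed.

Lemma scR (k a : R) : k *: a = k * a.
Proof. by []. Qed.

Lemma adP (a b c d : R) : ((a, b) : R * R) + (c, d) = (a + c, b + d).
Proof. by []. Qed.

Lemma opP (a b : R) : - ((a, b) : R * R) = (- a, - b).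
Proof. by []. Qed.

Lemma normP (x : R * R) : `|x| = Num.max `|x.1| `|x.2|.
Proof. by []. Qed.

Lemma bdry_notin Omega s : open Omega -> bdry Omega s -> ~ Omega s.
Proof. by move=> oO [_]; rewrite (proj1 (interior_id _) oO). Qed.

Lemma ball_add (s v : R * R) d : `|v| < d -> ball s d (s + v).
Proof. by rewrite -ball_normE /= opprD addrA subrr add0r normrN. Qed.

Lemma e1n : `|((1, 0) : R * R)| = 1.
Proof. by rewrite normP /= normr1 normr0; apply/max_idPl; exact: ler01. Qed.

Lemma e2n : `|((0, 1) : R * R)| = 1.
Proof. by rewrite normP /= normr1 normr0; apply/max_idPr; exact: ler01. Qed.

Lemma comb (v : R * R) k : (k * v.1) *: ((1, 0) : R * R) + (k * v.2) *: ((0, 1) : R * R) = k *: v.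
Proof. by case: v => v1 v2; rewrite !scP /= adP; congr pair; ring. Qed.

Lemma comb2 (v : R * R) k c : (k * v.1) *: ((1, 0) : R * R) + c *: ((0, 1) : R * R) = (k * v.1, c).
Proof. by case: v => v1 v2; rewrite !scP /= adP; congr pair; ring. Qed.

Lemma cvx (s t : R * R) h : (1 - h) *: s + h *: t = s + h *: (t - s).
Proof. by case: s t => s1 s2 [t1 t2]; rewrite opP !adP /= !scR; congr pair; ring. Qed.

Lemma comp_le (v : R * R) : `|v.1| <= `|v| /\ `|v.2| <= `|v|.
Proof. by rewrite normP le_max lexx le_max lexx orbT. Qed.
Lemma fwd_dir Omega (U : set (R * R)) rho s tau :
  convex_set2 Omega -> open Omega -> local_defining_fun Omega s U rho ->
  bdry Omega s -> bdry Omega tau -> dot (grad rho s) (tau - s) <= 0.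
Proof.
move=> cv oO [oU Us sm def g0] bs bt.
have [dr cr] := sm [::].
have [_ c1] := sm [:: ((1, 0) : R * R)].
have [_ c2] := sm [:: ((0, 1) : R * R)].
rewrite /= in dr cr c1 c2.
pose w := tau - s.
rewrite /grad /dot /= -/w.
set a := 'D_(1, 0) rho s; set b := 'D_(0, 1) rho s.
rewrite leNgt; apply/negP => cpos.
set c := a * w.1 + b * w.2 in cpos.
have rs : 0 <= rho s.
  rewrite leNgt; apply/negP => /(def s Us).2; exact: bdry_notin oO bs.
have n1 : \forall z \near s, w.1 * a - c / 2 < w.1 * 'D_(1, 0) rho z.
  have hc : (fun z => w.1 * 'D_(1, 0) rho z) @ s --> w.1 * a.
    by apply: cvgMl_tmp; apply: c1; rewrite inE.
  have lt : w.1 * a - c / 2 < w.1 * a by rewrite ltrBlDr ltrDl divr_gt0.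
  exact: (cvgr_gt _ hc _ lt).
have n2 : \forall z \near s, w.2 * b - c / 2 < w.2 * 'D_(0, 1) rho z.
  have hc : (fun z => w.2 * 'D_(0, 1) rho z) @ s --> w.2 * b.
    by apply: cvgMl_tmp; apply: c2; rewrite inE.
  have lt : w.2 * b - c / 2 < w.2 * b by rewrite ltrBlDr ltrDl divr_gt0.
  exact: (cvgr_gt _ hc _ lt).
have N : nbhs s (U `&` ((fun z => w.1 * a - c / 2 < w.1 * 'D_(1, 0) rho z) `&` (fun z => w.2 * b - c / 2 < w.2 * 'D_(0, 1) rho z))).
  apply: filterI; first exact: oU.
  exact: filterI.
move: N => /nbhs_ballP [d d0 Hb].
move: d0 => /= d0.
have Hv : forall v, `|v| < d -> [/\ U (s + v), w.1 * a - c / 2 < w.1 * 'D_(1, 0) rho (s + v)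
   & w.2 * b - c / 2 < w.2 * 'D_(0, 1) rho (s + v)].
  by move=> v /(ball_add s) /Hb [? [? ?]].
pose h := d / (2 * (`|w| + d)).
have wge := normr_ge0 w.
have D0 : 0 < 2 * (`|w| + d) by rewrite mulr_gt0 //; lra.
have h0 : 0 < h by rewrite /h divr_gt0.
have h1 : h <= 1 by rewrite /h ler_pdivrMr // mul1r; lra.
have hw : h * `|w| < d.
  by rewrite /h mulrAC ltr_pdivrMr //; nra.
have [cw1 cw2] := comp_le w.
have hw1 : `|h * w.1| < d.
  rewrite normrM gtr0_norm //; apply: le_lt_trans hw; by rewrite ler_pM2l.
have hw2 : `|h * w.2| < d.
  rewrite normrM gtr0_norm //; apply: le_lt_trans hw; by rewrite ler_pM2l.
have H1 : forall k, `|k| <= `|h * w.1| -> derivable rho (s + k *: ((1, 0) : R * R)) (1, 0) /\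
    {for (s + k *: ((1, 0) : R * R)), continuous rho}.
  move=> k hk; have : `|k *: ((1, 0) : R * R)| < d.
    by rewrite normrZ e1n mulr1; exact: le_lt_trans hw1.
  by case/Hv => Ux _ _; split; [exact: (dr _ _ Ux)|apply: cr; rewrite inE].
have [k1 [k1le E1]] := mvt_line _ _ _ _ H1.
pose q := s + (h * w.1) *: ((1, 0) : R * R).
have qE : forall k, q + k *: ((0, 1) : R * R) = s + ((h * w.1, k) : R * R).
  by move=> k; rewrite /q -addrA comb2.
have H2 : forall k, `|k| <= `|h * w.2| -> derivable rho (q + k *: ((0, 1) : R * R)) (0, 1) /\
    {for (q + k *: ((0, 1) : R * R)), continuous rho}.
  move=> k hk; rewrite qE; have : `|((h * w.1, k) : R * R)| < d.
    by rewrite normP /= gt_max hw1 /=; exact: le_lt_trans hw2.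
  by case/Hv => Ux _ _; split; [exact: (dr _ _ Ux)|apply: cr; rewrite inE].
have [k2 [k2le E2]] := mvt_line _ _ _ _ H2.
have [_ P1 _] : [/\ U (s + k1 *: ((1, 0) : R * R)), w.1 * a - c / 2 < w.1 * 'D_(1, 0) rho (s + k1 *: ((1, 0) : R * R))
   & w.2 * b - c / 2 < w.2 * 'D_(0, 1) rho (s + k1 *: ((1, 0) : R * R))].
  by apply: Hv; rewrite normrZ e1n mulr1; exact: le_lt_trans hw1.
have [_ _ P2] : [/\ U (s + ((h * w.1, k2) : R * R)), w.1 * a - c / 2 < w.1 * 'D_(1, 0) rho (s + ((h * w.1, k2) : R * R))
   & w.2 * b - c / 2 < w.2 * 'D_(0, 1) rho (s + ((h * w.1, k2) : R * R))].
  by apply: Hv; rewrite normP /= gt_max hw1 /=; exact: le_lt_trans hw2.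
have qw : q + (h * w.2) *: ((0, 1) : R * R) = s + h *: w by rewrite /q -addrA comb.
rewrite qw qE /q in E2.
have Uf : U (s + h *: w).
  have : `|h *: w| < d by rewrite normrZ gtr0_norm.
  by case/Hv.
have cf : closure Omega (s + h *: w).
  rewrite /w -cvx; apply: clos_conv => //; [exact: bs.1|exact: bt.1|by rewrite (ltW h0) h1].
have le0 := rho_le0 _ _ _ _ oU cr def Uf cf.
set X := w.1 * 'D_(1, 0) rho (s + k1 *: ((1, 0) : R * R)) in P1.
set Y := w.2 * 'D_(0, 1) rho (s + ((h * w.1, k2) : R * R)) in P2.
have XY : 0 < X + Y by rewrite /c in P1 P2 *; lra.
have key : 'D_(1, 0) rho (s + k1 *: ((1, 0) : R * R)) * (h * w.1) +
   'D_(0, 1) rho (s + ((h * w.1, k2) : R * R)) * (h * w.2) = h * (X + Y) by rewrite /X /Y; ring.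
have := mulr_gt0 h0 XY.
lra.
Qed.

Lemma bdry_seg Omega (x y : R * R) : open Omega -> Omega x -> ~ Omega y ->
  exists t : R, 0 <= t <= 1 /\ bdry Omega (x + t *: (y - x)).
Proof.
move=> oO Ox Oy.
pose p := fun t : R => x + t *: (y - x).
have pc : continuous p.
  have -> : p = (cst x) + (fun t : R => t *: (y - x)) by apply/funext.
  move=> t; apply: cvgD; first exact: cvg_cst.
  exact: scalel_continuous.
have cC : connected (p @` `[0, 1]).
  apply: connected_continuous_connected; first exact: segment_connected.
  exact: continuous_subspaceT.
apply: contrapT => nob.
have sep : separated Omega (~` closure Omega).
  split.
    by apply/seteqP; split => // z [].
  rewrite closure_setC; apply/seteqP; split => // z [Oz /=]; apply.
  have : Omega `<=` (closure Omega)° by rewrite -open_subsetE //; exact: subset_closure.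
  by apply.
have sub : p @` `[0, 1] `<=` Omega `|` ~` closure Omega.
  move=> _ [t t01 <-]; case: (pselect (Omega (p t))) => [|nO]; [by left|right].
  move=> cl; apply: nob; exists t; split; first by move: t01; rewrite /= in_itv.
  by split => //; rewrite (proj1 (interior_id _) oO).
have p1 : p 1 = y by rewrite /p scale1r addrC subrK.
have p0 : p 0 = x by rewrite /p scale0r addr0.
have [H|H] := connected_subset sep sub cC.
  by apply: Oy; rewrite -p1; apply: H; exists 1 => //=; rewrite in_itv /= lexx ler01.
by apply: (H (p 0)); [exists 0 => //=; rewrite in_itv /= lexx ler01|rewrite p0; exact: subset_closure].
Qed.
Lemma bnd (Omega : set (R*R)) : bounded_set Omega -> exists M : R, forall z, Omega z -> `|z| <= M.
Proof. by case=> M [Mr HM]; exists (M + 1); apply: HM; lra. Qed.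


Lemma half Omega (s m : R * R) : open Omega -> bounded_set Omega -> m != 0 ->
  (forall tau, bdry Omega tau -> tau <> s -> 0 <= dot m (s - tau)) ->
  forall x, Omega x -> dot m (x - s) <= 0.
Proof.
move=> oO bO m0 hyp x Ox; rewrite leNgt; apply/negP => c0.
have [M HM] := bnd Omega bO.
have nm : 0 < `|m| by rewrite normr_gt0.
pose k := (M + `|x| + 1) / `|m|.
have k0 : 0 < k.
  by rewrite /k divr_gt0 //; move: (normr_ge0 x) (HM x Ox) => ? ?; lra.
have Oy : ~ Omega (x + k *: m).
  have e : `|k *: m| = M + `|x| + 1 by rewrite normrZ gtr0_norm // /k divfK ?gt_eqF.
  move=> /HM; rewrite addrC => Hy; have := lerB_normD (k *: m) x.
  rewrite e => ?; lra.
have [t [/andP [t0 t1] bt]] := bdry_seg _ _ _ oO Ox Oy.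
have e : x + t *: (x + k *: m - x) = x + (t * k) *: m by rewrite [x + k *: m]addrC addrK scalerA.
rewrite e in bt; set tau := x + (t * k) *: m in bt.
have dpos : 0 < dot m (tau - s).
  have -> : tau - s = (x - s) + (t * k) *: m by rewrite /tau addrAC.
  rewrite dotDZ; have := dot_pos _ m0; have : 0 <= t * k by rewrite mulr_ge0 // ltW.
  move=> ? ?; have : 0 <= t * k * dot m m by rewrite mulr_ge0 // ltW.
  lra.
have ne : tau <> s.
  by move=> e'; move: dpos; rewrite e' subrr /dot /= !mulr0 addr0 ltxx.
have := hyp tau bt ne; rewrite dotN; lra.
Qed.

Lemma seg1 (m a b : R * R) k : dot m (a - (a + k *: (b - a))) = - k * dot m (b - a).
Proof. by case: m a b => m1 m2 [a1 a2] [b1 b2]; rewrite scP /dot /=; ring. Qed.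

Lemma seg2 (m a b : R * R) k : dot m (b - (a + k *: (b - a))) = (1 - k) * dot m (b - a).
Proof. by case: m a b => m1 m2 [a1 a2] [b1 b2]; rewrite scP /dot /=; ring. Qed.

Lemma seg3 (x y : R * R) t u : x + u *: ((1 - t) *: x + t *: y - x) = x + (u * t) *: (y - x).
Proof. by case: x y => x1 x2 [y1 y2]; rewrite !scP /=; congr (_ + (_, _)); ring. Qed.


Lemma rev_dir Omega (m : R * R -> R * R) : open Omega -> bounded_set Omega ->
  (forall s, bdry Omega s -> m s != 0) ->
  (forall s tau, bdry Omega s -> bdry Omega tau -> s <> tau -> 0 <= dot (m s) (s - tau)) ->
  convex_set2 Omega.
Proof.
move=> oO bO m0 hyp x y t Ox Oy /andP[t0 t1]; apply: contrapT => Nz.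
have [u [/andP[u0 u1] bs]] := bdry_seg _ _ _ oO Ox Nz.
rewrite seg3 in bs; set s := x + (u * t) *: (y - x) in bs.
have H := half _ _ _ oO bO (m0 s bs) (fun tau bt ne => hyp s tau bs bt (nesym ne)).
have Hx := H x Ox; have Hy := H y Oy.
rewrite /s seg1 in Hx; rewrite /s seg2 in Hy.
have sx : u * t != 0.
  apply/eqP => e; apply: (bdry_notin _ _ oO bs); by rewrite /s e scale0r addr0.
have sy : u * t != 1.
  apply/eqP => e; apply: (bdry_notin _ _ oO bs); by rewrite /s e scale1r addrC subrK.
have ut0 : 0 < u * t by rewrite lt_def sx mulr_ge0.
have ut1 : u * t < 1.
  by rewrite lt_def eq_sym sy /=; rewrite -(mulr1 1) ler_pM.
have d0 : dot (m s) (y - x) = 0 by nra.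
have /nbhs_ballP [e e0 He] := oO x Ox.
have ms : 0 < `|m s| by rewrite normr_gt0 m0.
set dl := e / (2 * `|m s|).
have dl0 : 0 < dl by rewrite /dl divr_gt0 // mulr_gt0.
have Bx : Omega (x + dl *: m s).
  apply: He; rewrite -ball_normE /= opprD addrA subrr add0r normrN normrZ gtr0_norm //.
  rewrite /dl invfM mulrA divfK ?gt_eqF //.
  move: e0 => /= e0; lra.
have := H _ Bx; rewrite addrAC dotDZ.
have -> : dot (m s) (x - s) = 0 by rewrite /s seg1 -/s d0 mulr0.
have := dot_pos _ (m0 s bs); move=> ? ?.
have : 0 < dl * dot (m s) (m s) by rewrite mulr_gt0.
lra.
Qed.

Lemma num_eq (g s t : R * R) k :
  (k *: g).1 * (s.1 - t.1) + (k *: g).2 * (s.2 - t.2) = k * - dot g (t - s).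
Proof. by case: g s t => g1 g2 [s1 s2] [t1 t2]; rewrite scP /dot /=; ring. Qed.

Lemma Dpos (s t : R * R) : s <> t -> 0 < (s.1 - t.1)^+2 + (s.2 - t.2)^+2.
Proof.
move=> ne; have : s - t != 0 by rewrite subr_eq0; apply/eqP.
by move/dot_pos; rewrite /dot !expr2.
Qed.

Lemma enorm_gt0 (g : R * R) : g != 0 -> 0 < enorm g.
Proof. by move/dot_pos; rewrite /enorm sqrtr_gt0 /dot !expr2. Qed.
End S.

Theorem proposition2p3 (R : realType) (Omega : set (R * R)) (n : R * R -> R * R) :
  smoothly_bounded Omega ->
  (forall sigma, bdry Omega sigma -> outward_unit_normal Omega sigma (n sigma)) ->
  (convex_set2 Omega <->
   forall sigma tau, bdry Omega sigma -> bdry Omega tau -> sigma <> tau ->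
     0 <= double_layer n sigma tau).
Proof.
move=> [oO bO _] hn; split.
  move=> cv s t bs bt ne.
  rewrite /double_layer re_div.
  have [U [rho [ldf ->]]] := hn s bs.
  have := @fwd_dir R Omega U rho s t cv oO ldf bs bt.
  case: (ldf) => _ _ _ _ g0.
  rewrite num_eq => H.
  apply: mulr_ge0; first by rewrite invr_ge0 ltW // pi_gt0.
  apply: divr_ge0; last by rewrite addr_ge0 // sqr_ge0.
  apply: mulr_ge0; first by rewrite invr_ge0 ltW // enorm_gt0.
  by rewrite oppr_ge0.
move=> hP; apply: (@rev_dir R Omega n oO bO).
  move=> s bs; have [U [rho [[_ _ _ _ g0] ->]]] := hn s bs.
  by rewrite scaler_eq0 negb_or invr_eq0 g0 andbT gt_eqF // enorm_gt0.
move=> s t bs bt ne; have := hP s t bs bt ne.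
rewrite /double_layer re_div pmulr_rge0 ?invr_gt0 ?pi_gt0 //.
by rewrite pmulr_lge0 ?invr_gt0 ?Dpos.
Qed.
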